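(* Let $\phi$ be an instance of \textsc{Max (2,3)-SAT} with $n$ variables and let $T_\phi$ be the tournament instance constructed from $\phi$ as described in the context. If $\phi$ admits an assignment that satisfies at least $k$ clauses, then $T_\phi$ has a seeding whose tournament value is at least $k+n$.
   Context: Tournament model: players form a finite set of size $2^{n'}$ totally ordered by strength (stronger beats weaker). A seeding is a bijection $\sigma$ from players to $[2^{n'}]$. In round $r=1,\dots,n'$, for each block of seed positions $\{(k-1)2^r+1,\dots,k2^r\}$, the winner $a$ of its first half $\{(k-1)2^r+1,\dots,(k-1)2^r+2^{r-1}\}$ plays the winner $b$ of its second half (a single-position block is won by the player seeded there), the stronger one wins the block, and the game has value $v(a,b)$ (values do not depend on the round). The tournament value is the sum of values of all games played. \textsc{Max (2,3)-SAT} instance: a CNF formula $\phi$ with variables $x_1,\dots,x_n$ and clauses $c_1,\dots,c_m$, each clause having exactly two literals and each variable appearing in at most three clauses. Construction of $T_\phi$: let $n'$ be the smallest integer with $16n\le 2^{n'}$ and $p=2^{n'}-16n$. Players: for each $i\in[n]$, variable players $x_i,x_i^T,x_i^F$ and special players $\widehat d_i,d_i,\widetilde d_i$; for each clause $c$, a clause player $c$; dummy players $f_1,\dots,f_{10n+p-m}$. Strength order (strongest first): $\widehat d_1>d_1>\widetilde d_1>\widehat d_2>d_2>\widetilde d_2>\dots>\widehat d_n>d_n>\widetilde d_n>x_1>x_1^T>x_1^F>\dots>x_n>x_n^T>x_n^F>c_1>\dots>c_m>f_1>\dots>f_{10n+p-m}$. Round-oblivious symmetric game values ($v(a,b)=v(b,a)$):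 for each $i$, $v(x_i,x_i^T)=v(x_i,x_i^F)=1$; for each clause $c$ containing a literal of variable $x$, $v(c,x^T)=1$ if $x$ appears non-negated in $c$ and $v(c,x^F)=1$ if it appears negated; for each $i$, $v(d_i,\widehat d_i)=v(d_i,\widetilde d_i)=v(d_i,x_i)=0$; for each $i$ and every player $Y$ for which the pair value has not been set above, $v(d_i,Y)=v(x_i,Y)=-5$; all remaining pairs have value $0$. Thus the values lie in $\{0,1,-5\}$. *)

(* Defs.v *)
From mathcomp Require Import all_boot all_order all_algebra.
Set Implicit Arguments. Unset Strict Implicit. Unset Printing Implicit Defensive.
Import Order.TTheory GRing.Theory Num.Theory.

(* Seed positions are 0-indexed: position j (0 <= j < 2^n') corresponds to
   seed j+1 of the paper.  [s j] is the player seeded at position j.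
   Block k of round r is {k*2^r, ..., (k+1)*2^r - 1}; its first half is
   block 2k of round r-1 and its second half is block 2k+1 of round r-1.
   [rank] measures strength: smaller rank = stronger. *)
Section Tournament.
Variables (P : Type) (rank : P -> nat) (v : P -> P -> int) (s : nat -> P).

Fixpoint winner (r k : nat) : P :=
  match r with
  | 0 => s k
  | r'.+1 =>
      let a := winner r' k.*2 in
      let b := winner r' k.*2.+1 in
      if rank a < rank b then a else b
  end.

Definition tournament_value (n' : nat) : int :=
  (\sum_(1 <= r < n'.+1) \sum_(0 <= k < 2 ^ (n' - r))
      v (winner r.-1 k.*2) (winner r.-1 k.*2.+1))%R.
End Tournament.

(* a literal is (variable, negated?) ; a clause is a pair of literals *)
Definition literal (n : nat) := ('I_n * bool)%type.
Definition clause (n : nat) := (literal n * literal n)%type.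

Definition lit_var n (l : literal n) : 'I_n := l.1.
Definition clause_has_var n (c : clause n) (x : 'I_n) : bool :=
  (lit_var c.1 == x) || (lit_var c.2 == x).
Definition clause_has_lit n (c : clause n) (x : 'I_n) (b : bool) : bool :=
  (c.1 == (x, b)) || (c.2 == (x, b)).

Definition max23_instance n m (phi : 'I_m -> clause n) : Prop :=
  (forall j : 'I_m, (phi j).1 != (phi j).2) /\  (forall x : 'I_n, #|[pred j : 'I_m | clause_has_var (phi j) x]| <= 3).

Definition lit_sat n (a : 'I_n -> bool) (l : literal n) : bool :=
  if l.2 then ~~ a l.1 else a l.1.
Definition clause_sat n (a : 'I_n -> bool) (c : clause n) : bool :=
  lit_sat a c.1 || lit_sat a c.2.
Definition num_sat n m (phi : 'I_m -> clause n) (a : 'I_n -> bool) : nat :=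
  #|[pred j : 'I_m | clause_sat a (phi j)]|.

Inductive player (n m q : nat) : Type :=
  | Dhat of 'I_n
  | Dd   of 'I_n
  | Dtil of 'I_n
  | Xv   of 'I_n
  | XT   of 'I_n
  | XF   of 'I_n
  | Cl   of 'I_m
  | Fd   of 'I_q.

Definition prank n m q (a : player n m q) : nat :=
  match a with
  | Dhat i => 3 * i
  | Dd i => 3 * i + 1
  | Dtil i => 3 * i + 2
  | Xv i => 3 * n + 3 * i
  | XT i => 3 * n + 3 * i + 1
  | XF i => 3 * n + 3 * i + 2
  | Cl j => 6 * n + j
  | Fd j => 6 * n + m + j
  end.

Section Values.
Variables (n m q : nat) (phi : 'I_m -> clause n).

Definition one_pair (a b : player n m q) : bool :=
  match a, b with
  | Xv i, XT j => i == j
  | Xv i, XF j => i == j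
  | Cl c, XT x => clause_has_lit (phi c) x false
  | Cl c, XF x => clause_has_lit (phi c) x true
  | _, _ => false
  end.

Definition zero_pair (a b : player n m q) : bool :=
  match a, b with
  | Dd i, Dhat j => i == j
  | Dd i, Dtil j => i == j
  | Dd i, Xv j => i == j
  | _, _ => false
  end.

Definition is_d_or_x (a : player n m q) : bool :=
  match a with Dd _ | Xv _ => true | _ => false end.

Definition game_value (a b : player n m q) : int :=
  if one_pair a b || one_pair b a then 1%R
  else if zero_pair a b || zero_pair b a then 0%R
  else if is_d_or_x a || is_d_or_x b then (-5)%R
  else 0%R.
End Values.

(* Main.v *)
Require Import Defs.
From mathcomp Require Import all_boot all_order all_algebra.
From mathcomp Require Import zify.
Import Order.TTheory GRing.Theory Num.Theory.
Set Implicit Arguments. Unset Strict Implicit. Unset Printing Implicit Defensive.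

Section Clauses.
Variables (n m : nat) (phi : 'I_m -> clause n) (a : 'I_n -> bool).
Hypothesis H23 : max23_instance phi.

Definition cv (j : 'I_m) : 'I_n :=
  if lit_sat a (phi j).1 then (phi j).1.1 else (phi j).2.1.

Definition crank (j : 'I_m) : nat :=
  #|[pred j' : 'I_m | (j' < j) && (cv j' == cv j)]|.

Lemma cv_has j : clause_has_var (phi j) (cv j).
Proof. by rewrite /clause_has_var /cv /lit_var; case: ifP; rewrite eqxx ?orbT. Qed.

Lemma cv_le3 i : #|[pred j | cv j == i]| <= 3.
Proof.
case: H23 => _ /(_ i) H; apply: leq_trans H; apply/subset_leq_card/subsetP => j.
by rewrite !inE => /eqP <-; apply: cv_has.
Qed.

Lemma crank_lt3 j : crank j < 3.
Proof.
have H := cv_le3 (cv j).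
have E := cardD1 j [pred j' : 'I_m | (j' <= j) && (cv j' == cv j)].
rewrite inE leqnn eqxx /= in E.
have E2 : #|[predD1 [pred j' : 'I_m | (j' <= j) && (cv j' == cv j)] & j]| = crank j.
  apply: eq_card => x; rewrite !inE /=.
  by rewrite ltn_neqAle -val_eqE /= andbA.
rewrite -E2 -add1n -E; apply: leq_trans H; apply/subset_leq_card/subsetP => x.
by rewrite !inE => /andP[].
Qed.

Lemma crank_inj j1 j2 : cv j1 = cv j2 -> crank j1 = crank j2 -> j1 = j2.
Proof.
wlog: j1 j2 / j1 <= j2.
  move=> W E1 E2; case: (leqP j1 j2) => h; first exact: W.
  by apply/esym/W => //; apply: ltnW.
rewrite leq_eqVlt => /orP[/eqP/val_inj -> //|lt12] Ecv Er.
have E := cardD1 j1 [pred j' : 'I_m | (j' < j2) && (cv j' == cv j2)].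
rewrite inE lt12 Ecv eqxx /= in E.
have : crank j1 <= #|[predD1 [pred j' : 'I_m | (j' < j2) && (cv j' == cv j2)] & j1]|.
  apply/subset_leq_card/subsetP => x; rewrite !inE Ecv => /andP[x1 ->].
  by rewrite (ltn_trans x1 lt12) andbT -val_eqE /= neq_ltn x1.
by rewrite Er /crank E add1n ltnn.
Qed.

Definition csat j := clause_sat a (phi j).

Lemma cv_sat j : csat j -> clause_has_lit (phi j) (cv j) (~~ a (cv j)).
Proof.
rewrite /csat /clause_sat /clause_has_lit /cv /lit_sat.
case: (phi j) => [[x1 b1] [x2 b2]] /=.
case: b1; case: b2 => /=; case E1: (a x1); case E2: (a x2) => //= _; by rewrite ?E1 ?E2 /= eqxx ?orbT.
Qed.

Lemma m_le3n : m <= 3 * n.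
Proof.
have -> : m = \sum_(i < n) #|[pred j | cv j == i]|.
  rewrite -{1}(card_ord m) -sum1_card (partition_big cv predT) //=.
  by apply: eq_bigr => i _; rewrite sum1_card.
rewrite -[n in 3 * n]card_ord -sum1_card big_distrr /=.
by apply: leq_sum => i _; rewrite muln1 cv_le3.
Qed.

Definition cnt (i : 'I_n) (r : nat) := #|[pred j | csat j && (cv j == i) && (crank j == r)]|.

Lemma cnt_le1 i r : cnt i r <= 1.
Proof.
apply/card_le1_eqP => x y; rewrite !inE => /andP[/andP[_ /eqP h1] /eqP h2] /andP[/andP[_ /eqP h3] /eqP h4].
by apply: crank_inj; rewrite ?h1 ?h3 ?h2 ?h4.
Qed.

Lemma sat_split : num_sat phi a = \sum_(i < n) (cnt i 0 + cnt i 1 + cnt i 2).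
Proof.
rewrite /num_sat -sum1_card (partition_big cv predT) //=.
apply: eq_bigr => i _.
rewrite /cnt -!sum1_card big_mkcond [X in _ = X + _ + _]big_mkcond
  [X in _ = _ + X + _]big_mkcond [X in _ = _ + _ + X]big_mkcond /= -!big_split /=.
apply: eq_bigr => j _; rewrite !inE /=.
have := crank_lt3 j.
rewrite /csat; case: (clause_sat _ _); case: (cv j == i) => //=.
by case: (crank j) => [|[|[|]]].
Qed.
End Clauses.
From mathcomp Require Import lra.
Section Sums.
Local Open Scope ring_scope.
Variable F : nat -> int.
Hypothesis F0 : forall k, 0 <= F k.

Lemma sumF0 a b : 0 <= \sum_(a <= k < b) F k.
Proof. by apply: sumr_ge0 => k _; apply: F0. Qed.

Lemma sum_one a b t : (a <= t < b)%N -> F t <= \sum_(a <= k < b) F k.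
Proof.
move=> /andP[h1 h2].
rewrite (big_cat_nat h1 (ltnW h2)) /= (big_ltn h2).
have := sumF0 a t; have := sumF0 t.+1 b; lra.
Qed.

Lemma sum_two a b t0 t1 : (a <= t0)%N -> (t0 < t1)%N -> (t1 < b)%N ->
  F t0 + F t1 <= \sum_(a <= k < b) F k.
Proof.
move=> h1 h2 h3.
rewrite (big_cat_nat (n := t1) (leq_trans h1 (ltnW h2)) (ltnW h3)) /=.
by apply: lerD; apply: sum_one; lia.
Qed.

Lemma sum_blocks M n N : (M * n <= N)%N ->
  \sum_(i < n) \sum_(M * i <= k < M * i + M) F k <= \sum_(0 <= k < N) F k.
Proof.
elim: n N => [|n IH] N h.
  by rewrite big_ord0; apply: sumF0.
rewrite big_ord_recr /=.
have h1 : (M * n <= M * n + M)%N by apply: leq_addr.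
have h2 : (M * n + M <= N)%N by rewrite -mulnSr.
rewrite (big_cat_nat (n := M * n) (leq0n _) (leq_trans h1 h2)) /=.
rewrite (big_cat_nat (n := M * n + M) h1 h2) /=.
have := IH (M * n) (leqnn _); have := sumF0 (M * n + M) N; lra.
Qed.

Lemma round_two M n N t0 t1 : (M * n <= N)%N -> (t0 < t1)%N -> (t1 < M)%N ->
  \sum_(i < n) (F (M * i + t0) + F (M * i + t1)) <= \sum_(0 <= k < N) F k.
Proof.
move=> hN h01 h1M; apply: le_trans (sum_blocks hN).
apply: ler_sum => i _; apply: sum_two; lia.
Qed.

Lemma round_one M n N t : (M * n <= N)%N -> (t < M)%N ->
  \sum_(i < n) F (M * i + t) <= \sum_(0 <= k < N) F k.
Proof.
move=> hN htM; apply: le_trans (sum_blocks hN).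
apply: ler_sum => i _; apply: sum_one; lia.
Qed.
End Sums.
Section Layout.
Variables (n m q n' : nat) (phi : 'I_m -> clause n) (a : 'I_n -> bool) (p0 : player n m q).
Hypotheses (H23 : max23_instance phi) (Hq : 6*n + m + q = 2^n') (HN : 16*n <= 2^n').

Local Notation N := (2^n').
Local Notation P := (player n m q).
Local Notation PDhat := (@Dhat n m q).
Local Notation PDd := (@Dd n m q).
Local Notation PDtil := (@Dtil n m q).
Local Notation PXv := (@Xv n m q).
Local Notation PXT := (@XT n m q).
Local Notation PXF := (@XF n m q).
Local Notation PCl := (@Cl n m q).
Local Notation PFd := (@Fd n m q).

Definition A := ('I_6 * 'I_n + 'I_m)%type.
Definition slotk (c : nat) := nth 0 [:: 0; 1; 2; 3; 4; 8] c.
Definition cslot (r : nat) := nth 0 [:: 9; 10; 12] r.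
Definition ccv := cv phi a.
Definition ccr := crank phi a.

Definition apos (x : A) : nat :=
  match x with inl (c, i) => 16 * i + slotk c | inr j => 16 * ccv j + cslot (ccr j) end.

Lemma slotk_le (c : 'I_6) : slotk c <= 8.
Proof. by case: c => [[|[|[|[|[|[|//]]]]]] Hc]. Qed.

Lemma cslot_cases j : [\/ cslot (ccr j) = 9, cslot (ccr j) = 10 | cslot (ccr j) = 12].
Proof. have := crank_lt3 a H23 j; rewrite /ccr; case: (crank phi a j) => [|[|[|//]]] _; by constructor. Qed.

Lemma apos_bound x : apos x + 4 <= 16 * n.
Proof.
case: x => [[c i]|j] /=.
  have := slotk_le c; have := ltn_ord i; lia.
have := ltn_ord (ccv j); case: (cslot_cases j) => ->; lia.
Qed.

Lemma apos_lt x : apos x < N.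
Proof. have := apos_bound x; lia. Qed.

Lemma apos_inj : injective apos.
Proof.
move=> [[c i]|j] [[c' i']|j'] /=.
- move=> E.
  have Ei : i = i' :> nat by have := slotk_le c; have := slotk_le c'; lia.
  have Ec : slotk c = slotk c' by lia.
  rewrite (val_inj Ei); congr (inl (_, _)); apply/val_inj.
  by clear E; move: Ec; case: c => [[|[|[|[|[|[|//]]]]]] Hc]; case: c' => [[|[|[|[|[|[|//]]]]]] Hc'].
- by move=> E; exfalso; have := slotk_le c; case: (cslot_cases j') => E2; rewrite E2 in E; lia.
- by move=> E; exfalso; have := slotk_le c'; case: (cslot_cases j) => E2; rewrite E2 in E; lia.
- move=> E.
  have Ei : ccv j = ccv j' :> nat by case: (cslot_cases j) => E2; case: (cslot_cases j') => E3; rewrite E2 E3 in E; lia.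
  have Ec : cslot (ccr j) = cslot (ccr j') by lia.
  have Er : ccr j = ccr j'.
    move: Ec; have := crank_lt3 a H23 j; have := crank_lt3 a H23 j'; rewrite /ccr.
    by case: (crank phi a j) => [|[|[|//]]]; case: (crank phi a j') => [|[|[|//]]].
  by rewrite (crank_inj (val_inj Ei) Er).
Qed.

Definition f (x : A) : 'I_N := Ordinal (apos_lt x).

Lemma f_inj : injective f.
Proof. by move=> x y /(congr1 val) /= /apos_inj. Qed.

Definition D : {set 'I_N} := ~: [set f x | x : A].

Lemma cardD : #|D| = q.
Proof.
have := cardsC [set f x | x : A]; rewrite card_imset; last exact: f_inj.
rewrite card_ord card_sum card_prod !card_ord -/D => E; apply: (@addnI (6*n+m)); exact: (etrans E (esym Hq)).
Qed.

Definition h (j : 'I_q) : 'I_N := enum_val (cast_ord (esym cardD) j).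

Lemma h_inD j : h j \in D.
Proof. exact: enum_valP. Qed.

Lemma h_inj : injective h.
Proof. by move=> j1 j2 /enum_val_inj /(congr1 val) /= /val_inj. Qed.

Lemma h_surj x : x \in D -> exists j, h j = x.
Proof.
move=> Hx; exists (cast_ord cardD (enum_rank_in Hx x)).
by rewrite /h cast_ordK enum_rankK_in.
Qed.

Definition Lt (i : 'I_n) : P := if a i then PXT i else PXF i.
Definition Lp (i : 'I_n) : P := if a i then PXF i else PXT i.

Definition decode (x : A) : P :=
  match x with
  | inl (c, i) => match val c with 0 => PDd i | 1 => PDtil i | 2 => PXv i | 3 => Lp i | 4 => PDhat i | _ => Lt i end
  | inr j => PCl j end.

Definition o0 : 'I_6 := @Ordinal 6 0 isT.
Definition o1 : 'I_6 := @Ordinal 6 1 isT.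
Definition o2 : 'I_6 := @Ordinal 6 2 isT.
Definition o3 : 'I_6 := @Ordinal 6 3 isT.
Definition o4 : 'I_6 := @Ordinal 6 4 isT.
Definition o5 : 'I_6 := @Ordinal 6 5 isT.

Definition sigma (p : P) : 'I_N :=
  match p with
  | Dd i => f (inl (o0, i)) | Dtil i => f (inl (o1, i)) | Xv i => f (inl (o2, i))
  | Dhat i => f (inl (o4, i))
  | XT i => f (inl (if a i then o5 else o3, i))
  | XF i => f (inl (if a i then o3 else o5, i))
  | Cl j => f (inr j) | Fd j => h j end.

Definition g (pos : 'I_N) : P :=
  match [pick x | f x == pos] with
  | Some x => decode x
  | None => match [pick j | h j == pos] with Some j => PFd j | None => p0 end end.

Lemma g_f x : g (f x) = decode x.
Proof.
rewrite /g; case: pickP => [y /eqP /f_inj -> //|H].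
by have := H x; rewrite eqxx.
Qed.

Lemma g_h j : g (h j) = PFd j.
Proof.
rewrite /g; case: pickP => [y /eqP E|_].
  by have := h_inD j; rewrite -E /D inE imset_f.
case: pickP => [y /eqP /h_inj -> //|H].
by have := H j; rewrite eqxx.
Qed.

Lemma sigmaK : cancel sigma g.
Proof.
case=> [i|i|i|i|i|i|j|j] /=; rewrite ?g_f ?g_h //=.
all: by rewrite /Lt /Lp; case: (a i).
Qed.

Lemma gK : cancel g sigma.
Proof.
move=> pos; rewrite /g; case: pickP => [x /eqP <-|H].
  case: x => [[c i]|j] //=.
  case: c => [[|[|[|[|[|[|//]]]]]] Hc] /=; rewrite /Lt /Lp /=;
  try (case E: (a i) => /=; rewrite ?E); by apply: (congr1 (fun c => f (inl (c, i)))); apply/val_inj.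
have : pos \in D by rewrite /D inE; apply/imsetP => -[x _ E]; have := H x; rewrite E eqxx.
move=> /h_surj [j Ej].
case: pickP => [y /eqP // |H2].
by have := H2 j; rewrite Ej eqxx.
Qed.

Lemma sigma_bij : bijective sigma.
Proof. exists g; [exact: sigmaK | exact: gK]. Qed.

Lemma clamp_lt j : minn j N.-1 < N.
Proof. have := expn_gt0 2 n'; lia. Qed.

Definition clamp j : 'I_N := Ordinal (clamp_lt j).

Definition s (j : nat) : P := g (clamp j).

Lemma s_sigma p : s (sigma p) = p.
Proof.
rewrite /s; have -> : clamp (sigma p) = sigma p.
  apply/val_inj => /=; have := ltn_ord (sigma p); lia.
exact: sigmaK.
Qed.

Lemma s_apos x : s (apos x) = decode x.
Proof.
rewrite /s; have -> : clamp (apos x) = f x.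
  apply/val_inj => /=; have := apos_lt x; lia.
exact: g_f.
Qed.

Lemma s_cases pos : (exists x, apos x = pos /\ s pos = decode x) \/ (exists j, s pos = PFd j).
Proof.
case: (boolP (clamp pos \in D)) => [/h_surj [j Ej]|].
  by right; exists j; rewrite /s -Ej g_h.
rewrite /D inE negbK => /imsetP [x _ Ex].
left; exists x; split; last by rewrite /s Ex g_f.
move: (congr1 val Ex) => /=; have := apos_bound x; lia.
Qed.


Local Notation W := (winner (@prank n m q) s).
Local Notation gv := (@game_value n m q phi).

Definition cmp (x y : P) := if prank x < prank y then x else y.

Lemma Wstep r k b : k.*2 = b -> W r.+1 k = cmp (W r b) (W r b.+1).
Proof. by move=> <-. Qed.

Lemma cmpL x y : prank x < prank y -> cmp x y = x.
Proof. by rewrite /cmp => ->. Qed.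
Lemma cmpR x y : prank y <= prank x -> cmp x y = y.
Proof. by rewrite /cmp ltnNge => ->. Qed.
Lemma cmp_or x y : cmp x y = x \/ cmp x y = y.
Proof. by rewrite /cmp; case: ifP; auto. Qed.

Definition is_low (p : P) := match p with Cl _ | Fd _ => true | _ => false end.
Definition is_fd (p : P) := match p with Fd _ => true | _ => false end.

Lemma low_rank p : is_low p -> 6 * n <= prank p.
Proof. by case: p => //= j _; lia. Qed.
Lemma fd_rank p : is_fd p -> 6 * n + m <= prank p.
Proof. by case: p => //= j _; lia. Qed.
Lemma fd_low p : is_fd p -> is_low p.
Proof. by case: p. Qed.
Lemma low_notdx p : is_low p -> ~~ is_d_or_x p.
Proof. by case: p. Qed.
Lemma cmp_low x y : is_low x -> is_low y -> is_low (cmp x y).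
Proof. by case: (cmp_or x y) => ->. Qed.
Lemma cmp_fd x y : is_fd x -> is_fd y -> is_fd (cmp x y).
Proof. by case: (cmp_or x y) => ->. Qed.
Lemma cmp_Cl j y : is_fd y -> cmp (PCl j) y = PCl j.
Proof. move=> /fd_rank h; apply: cmpL => /=; have := ltn_ord j; lia. Qed.
Lemma Lt_rank i : prank (Lt i) < 6 * n.
Proof. rewrite /Lt; case: (a i) => /=; have := ltn_ord i; lia. Qed.
Lemma Lp_rank (i : 'I_n) : 3 * n + 3 * i < prank (Lp i).
Proof. rewrite /Lp; case: (a i) => /=; lia. Qed.
Lemma Lt_notdx i : ~~ is_d_or_x (Lt i).
Proof. by rewrite /Lt; case: (a i). Qed.

Lemma s0 (i : 'I_n) : s (16 * i) = PDd i.
Proof. by have := s_apos (inl (o0, i)); rewrite /= addn0. Qed.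
Lemma s1 (i : 'I_n) : s (16 * i + 1) = PDtil i.
Proof. exact: (s_apos (inl (o1, i))). Qed.
Lemma s2 (i : 'I_n) : s (16 * i + 2) = PXv i.
Proof. exact: (s_apos (inl (o2, i))). Qed.
Lemma s3 (i : 'I_n) : s (16 * i + 3) = Lp i.
Proof. exact: (s_apos (inl (o3, i))). Qed.
Lemma s4 (i : 'I_n) : s (16 * i + 4) = PDhat i.
Proof. exact: (s_apos (inl (o4, i))). Qed.
Lemma s8 (i : 'I_n) : s (16 * i + 8) = Lt i.
Proof. exact: (s_apos (inl (o5, i))). Qed.
Lemma sCl j : s (16 * ccv j + cslot (ccr j)) = PCl j.
Proof. exact: (s_apos (inr j)). Qed.

Lemma slotk_vals (c : 'I_6) : slotk c <= 4 \/ slotk c = 8.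
Proof. case: c => [[|[|[|[|[|[|//]]]]]] Hc]; rewrite /slotk /=; auto. Qed.

Lemma s_low (i : 'I_n) c : 5 <= c < 16 -> c <> 8 -> is_low (s (16 * i + c)).
Proof.
move=> /andP[h1 h2] h3; case: (s_cases (16 * i + c)) => [[x [E ->]]|[j ->]] //.
case: x E => [[c' i']|j] /= E; last by [].
exfalso; have := ltn_ord i'; have := ltn_ord i; case: (slotk_vals c') => h; lia.
Qed.

Lemma s_fd (i : 'I_n) c : 5 <= c < 16 -> c <> 8 -> c <> 9 -> c <> 10 -> c <> 12 -> is_fd (s (16 * i + c)).
Proof.
move=> /andP[h1 h2] h3 h4 h5 h6; case: (s_cases (16 * i + c)) => [[x [E ->]]|[j ->]] //.
exfalso; case: x E => [[c' i']|j] /= E.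
  have := ltn_ord i'; have := ltn_ord i; case: (slotk_vals c') => h; lia.
have := ltn_ord (ccv j); have := ltn_ord i; case: (cslot_cases j) => h; rewrite h in E; lia.
Qed.

Lemma s_dx pos : is_d_or_x (s pos) -> exists i : 'I_n, pos = 16 * i \/ pos = 16 * i + 2.
Proof.
case: (s_cases pos) => [[x [E ->]]|[j ->]] //.
case: x E => [[c i]|j] //= E.
case: c E => [[|[|[|[|[|[|//]]]]]] Hc] //= E; rewrite /Lp /Lt //=; try by case: (a i).
all: move=> _; exists i; rewrite -E /slotk /=; lia.
Qed.

Section Block.
Variable i : 'I_n.
Let hi := ltn_ord i.

Lemma W1_0 : W 1 (8 * i) = PDd i.
Proof. rewrite (Wstep _ (b := 16 * i)); last by rewrite -mul2n; lia. rewrite /= -[(16 * i).+1]addn1 s0 s1. apply: cmpL => /=; lia. Qed.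
Lemma W1_1 : W 1 (8 * i + 1) = PXv i.
Proof. rewrite (Wstep _ (b := 16 * i + 2)); last by rewrite -mul2n; lia. rewrite /= -addnS s2 s3. apply: cmpL; have := Lp_rank i; rewrite /=; lia. Qed.
Lemma W1_2 : W 1 (8 * i + 2) = PDhat i.
Proof.
rewrite (Wstep _ (b := 16 * i + 4)); last by rewrite -mul2n; lia. rewrite /= -addnS s4.
apply: cmpL; have := low_rank (s_low (c := 5) i isT ltac:(lia)); rewrite /=; lia.
Qed.
Lemma W1_3 : is_fd (W 1 (8 * i + 3)).
Proof.
rewrite (Wstep _ (b := 16 * i + 6)); last by rewrite -mul2n; lia. rewrite /= -addnS.
by apply: cmp_fd; apply: s_fd; lia.
Qed.
Lemma W1_4 : W 1 (8 * i + 4) = Lt i.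
Proof.
rewrite (Wstep _ (b := 16 * i + 8)); last by rewrite -mul2n; lia. rewrite /= -addnS s8.
apply: cmpL; have := low_rank (s_low (c := 9) i isT ltac:(lia)); have := Lt_rank i; lia.
Qed.
Lemma W1_5 : is_low (W 1 (8 * i + 5)) /\ forall j, s (16 * i + 10) = PCl j -> W 1 (8 * i + 5) = PCl j.
Proof.
rewrite (Wstep _ (b := 16 * i + 10)); last by rewrite -mul2n; lia. rewrite /= -addnS.
split; first by apply: cmp_low; apply: s_low; lia.
by move=> j ->; apply: cmp_Cl; apply: s_fd; lia.
Qed.
Lemma W1_6 : is_low (W 1 (8 * i + 6)) /\ forall j, s (16 * i + 12) = PCl j -> W 1 (8 * i + 6) = PCl j.
Proof.
rewrite (Wstep _ (b := 16 * i + 12)); last by rewrite -mul2n; lia. rewrite /= -addnS.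
split; first by apply: cmp_low; apply: s_low; lia.
by move=> j ->; apply: cmp_Cl; apply: s_fd; lia.
Qed.
Lemma W1_7 : is_fd (W 1 (8 * i + 7)).
Proof.
rewrite (Wstep _ (b := 16 * i + 14)); last by rewrite -mul2n; lia. rewrite /= -addnS.
by apply: cmp_fd; apply: s_fd; lia.
Qed.
Lemma W2_0 : W 2 (4 * i) = PDd i.
Proof.
rewrite (Wstep _ (b := 8 * i)); last by rewrite -mul2n; lia. rewrite -[(8 * i).+1]addn1 W1_0 W1_1.
apply: cmpL => /=; lia.
Qed.
Lemma W2_1 : W 2 (4 * i + 1) = PDhat i.
Proof.
rewrite (Wstep _ (b := 8 * i + 2)); last by rewrite -mul2n; lia. rewrite -addnS W1_2.
apply: cmpL; have := fd_rank W1_3; rewrite /=; lia.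
Qed.
Lemma W2_2 : W 2 (4 * i + 2) = Lt i.
Proof.
rewrite (Wstep _ (b := 8 * i + 4)); last by rewrite -mul2n; lia. rewrite -addnS W1_4.
apply: cmpL; have := low_rank (proj1 W1_5); have := Lt_rank i; lia.
Qed.
Lemma W2_3 : is_low (W 2 (4 * i + 3)) /\ forall j, s (16 * i + 12) = PCl j -> W 2 (4 * i + 3) = PCl j.
Proof.
rewrite (Wstep _ (b := 8 * i + 6)); last by rewrite -mul2n; lia. rewrite -addnS.
split; first by apply: cmp_low; [exact: (proj1 W1_6) | apply: fd_low; exact: W1_7].
by move=> j /(proj2 W1_6) ->; apply: cmp_Cl; exact: W1_7.
Qed.
Lemma W3_0 : W 3 (2 * i) = PDhat i.
Proof.
rewrite (Wstep _ (b := 4 * i)); last by rewrite -mul2n; lia. rewrite -[(4 * i).+1]addn1 W2_0 W2_1.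
apply: cmpR => /=; lia.
Qed.
Lemma W3_1 : W 3 (2 * i + 1) = Lt i.
Proof.
rewrite (Wstep _ (b := 4 * i + 2)); last by rewrite -mul2n; lia. rewrite -addnS W2_2.
apply: cmpL; have := low_rank (proj1 W2_3); have := Lt_rank i; lia.
Qed.
End Block.

Lemma W_dx r k : is_d_or_x (W r k) -> exists i : 'I_n,
  (r = 0 /\ (k = 16 * i \/ k = 16 * i + 2)) \/ (r = 1 /\ (k = 8 * i \/ k = 8 * i + 1)) \/ (r = 2 /\ k = 4 * i).
Proof.
elim: r k => [|r IH] k.
  by move=> /s_dx [i hi]; exists i; left.
move=> Hd.
have Hor : is_d_or_x (W r k.*2) \/ is_d_or_x (W r k.*2.+1).
  by move: Hd; rewrite (Wstep _ (b := k.*2)) //; case: (cmp_or (W r k.*2) (W r k.*2.+1)) => ->; auto.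
move: Hd; case: Hor => /IH [i [[-> E]|[[-> E]|[-> E]]]] Hd; rewrite -mul2n in E.
- by exists i; right; left; split => //; lia.
- by exists i; right; right; split => //; lia.
- have Ek : k = 2 * i by lia.
  by move: Hd; rewrite Ek W3_0.
- by exfalso; lia.
- by exists i; right; right; split => //; lia.
- by exfalso; lia.
Qed.

Definition G r k := gv (W r k.*2) (W r k.*2.+1).

Lemma gv_nonneg x y : ~~ is_d_or_x x -> ~~ is_d_or_x y -> (0 <= gv x y)%R.
Proof.
move=> /negbTE hx /negbTE hy; rewrite /game_value hx hy /=.
by repeat case: ifP.
Qed.

Section Block2.
Variable i : 'I_n.
Let hi := ltn_ord i.

Lemma G_0_8i : G 0 (8 * i) = 0%R.
Proof.
rewrite /G (_ : (8 * i).*2 = 16 * i); last by rewrite -mul2n; lia.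
by rewrite /= -[(16 * i).+1]addn1 s0 s1 /game_value /= eqxx.
Qed.
Lemma G_0_8i1 : G 0 (8 * i + 1) = 1%R.
Proof.
rewrite /G (_ : (8 * i + 1).*2 = 16 * i + 2); last by rewrite -mul2n; lia.
by rewrite /= -addnS s2 s3 /Lp; case: (a i); rewrite /game_value /= eqxx.
Qed.
Lemma G_1_4i : G 1 (4 * i) = 0%R.
Proof.
rewrite /G (_ : (4 * i).*2 = 8 * i); last by rewrite -mul2n; lia.
by rewrite -[(8 * i).+1]addn1 W1_0 W1_1 /game_value /= eqxx.
Qed.
Lemma G_2_2i : G 2 (2 * i) = 0%R.
Proof.
rewrite /G (_ : (2 * i).*2 = 4 * i); last by rewrite -mul2n; lia.
by rewrite -[(4 * i).+1]addn1 W2_0 W2_1 /game_value /= eqxx.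
Qed.
End Block2.

Lemma G_nonneg r k : (0 <= G r k)%R.
Proof.
case Hx: (is_d_or_x (W r k.*2)).
  move: Hx => /W_dx [i [[-> [E|E]]|[[-> [E|E]]|[-> E]]]]; rewrite -mul2n in E.
  - by rewrite (_ : k = 8 * i) ?G_0_8i //; lia.
  - by rewrite (_ : k = 8 * i + 1) ?G_0_8i1 //; lia.
  - by rewrite (_ : k = 4 * i) ?G_1_4i //; lia.
  - by exfalso; lia.
  - by rewrite (_ : k = 2 * i) ?G_2_2i //; lia.
case Hy: (is_d_or_x (W r k.*2.+1)); last by apply: gv_nonneg; rewrite ?Hx ?Hy.
move: Hy => /W_dx [i [[-> [E|E]]|[[-> [E|E]]|[-> E]]]]; rewrite -mul2n in E.
- by exfalso; lia.
- by exfalso; lia.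
- by exfalso; lia.
- by rewrite (_ : k = 4 * i) ?G_1_4i //; lia.
- by exfalso; lia.
Qed.

Lemma Lt_vs (i : 'I_n) (Y : P) r : is_low Y ->
  (forall j, ccv j = i -> ccr j = r -> Y = PCl j) -> ((cnt phi a i r)%:Z <= gv (Lt i) Y)%R.
Proof.
move=> hY hC; case: (posnP (cnt phi a i r)) => [->|].
  by apply: gv_nonneg; [exact: Lt_notdx | exact: low_notdx].
move=> hpos; have h1 := cnt_le1 phi a i r.
have -> : cnt phi a i r = 1 by lia.
move: hpos; rewrite /cnt => /card_gt0P [j]; rewrite inE => /andP[/andP[hs /eqP hcv] /eqP hr].
rewrite (hC j hcv hr).
have := cv_sat hs; rewrite hcv /Lt /game_value.
by case: (a i) => /= ->; rewrite ?orbT.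
Qed.

Lemma block (i : 'I_n) :
  ((1 + (cnt phi a i 0 + cnt phi a i 1 + cnt phi a i 2))%:Z <=
   G 0 (8 * i + 1) + G 0 (8 * i + 4) + G 1 (4 * i + 2) + G 2 (2 * i + 1))%R.
Proof.
have hi := ltn_ord i.
rewrite !PoszD G_0_8i1 -!addrA; apply: lerD => //.
rewrite !addrA; apply: lerD; [apply: lerD|].
- rewrite /G (_ : (8 * i + 4).*2 = 16 * i + 8); last by rewrite -mul2n; lia.
  rewrite /= -addnS s8; apply: Lt_vs; first by apply: s_low; lia.
  move=> j hcv hr; by rewrite (_ : 16 * i + 9 = 16 * ccv j + cslot (ccr j)) ?sCl // hcv hr.
- rewrite /G (_ : (4 * i + 2).*2 = 8 * i + 4); last by rewrite -mul2n; lia.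
  rewrite -addnS W1_4; apply: Lt_vs; first exact: (proj1 (W1_5 i)).
  move=> j hcv hr; apply: (proj2 (W1_5 i)).
  by rewrite (_ : 16 * i + 10 = 16 * ccv j + cslot (ccr j)) ?sCl // hcv hr.
- rewrite /G (_ : (2 * i + 1).*2 = 4 * i + 2); last by rewrite -mul2n; lia.
  rewrite -addnS W2_2; apply: Lt_vs; first exact: (proj1 (W2_3 i)).
  move=> j hcv hr; apply: (proj2 (W2_3 i)).
  by rewrite (_ : 16 * i + 12 = 16 * ccv j + cslot (ccr j)) ?sCl // hcv hr.
Qed.

Lemma total_bound : ((n + num_sat phi a)%:Z <= tournament_value (@prank n m q) gv s n')%R.
Proof.
have -> : n + num_sat phi a = \sum_(i < n) (1 + (cnt phi a i 0 + cnt phi a i 1 + cnt phi a i 2)).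
  by rewrite (sat_split a H23) [RHS]big_split /= sum_nat_const card_ord muln1.
rewrite -natz natr_sum.
under eq_bigr do rewrite natz.
have B := ler_sum (index_enum 'I_n) (P := xpredT) (fun i _ => block i).
apply: le_trans B _.
rewrite !big_split /=.
have HR : forall r, (0 <= \sum_(0 <= k < 2 ^ (n' - r)) G r.-1 k)%R.
  by move=> r; apply: sumr_ge0 => k _; apply: G_nonneg.
case: (posnP n) => [n0|npos].
  rewrite !big1; first (by rewrite !addr0; apply: sumr_ge0 => r _; apply: HR);
  by case=> i hi; exfalso; lia.
have n4 : 4 <= n'.
  rewrite leqNgt; apply/negP => h.
  have : 2 ^ n' <= 2 ^ 3 by rewrite leq_exp2l // -ltnS.
  lia.
have E1 : 2 ^ n' = 2 ^ (n' - 1) * 2 ^ 1 by rewrite -expnD; congr (_ ^ _); lia.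
have E2 : 2 ^ n' = 2 ^ (n' - 2) * 2 ^ 2 by rewrite -expnD; congr (_ ^ _); lia.
have E3 : 2 ^ n' = 2 ^ (n' - 3) * 2 ^ 3 by rewrite -expnD; congr (_ ^ _); lia.
have R1 := round_two (F := G 0) (G_nonneg 0) (M := 8) (n := n) (N := 2 ^ (n' - 1)) (t0 := 1) (t1 := 4) ltac:(lia) isT isT.
have R2 := round_one (F := G 1) (G_nonneg 1) (M := 4) (n := n) (N := 2 ^ (n' - 2)) (t := 2) ltac:(lia) isT.
have R3 := round_one (F := G 2) (G_nonneg 2) (M := 2) (n := n) (N := 2 ^ (n' - 3)) (t := 1) ltac:(lia) isT.
have T1 := sum_two HR (a := 1) (b := 3) (t0 := 1) (t1 := 2) isT isT isT.
have T2 := sum_one HR (a := 3) (b := n'.+1) (t := 3) ltac:(lia).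
rewrite /tournament_value (big_cat_nat (n := 3)) //=; last lia.
apply: le_trans (lerD T1 T2).
rewrite -big_split /=.
by apply: lerD; first apply: lerD.
Qed.

End Layout.

Unset Implicit Arguments.

Theorem lemma3 (n m : nat) (phi : 'I_m -> clause n) (n' k : nat) :
  max23_instance phi ->
  (16 * n <= 2 ^ n')%N ->
  (forall e, (16 * n <= 2 ^ e)%N -> (n' <= e)%N) ->
  (exists a : 'I_n -> bool, (k <= num_sat phi a)%N) ->
  let p := (2 ^ n' - 16 * n)%N in
  let q := (10 * n + p - m)%N in
  exists (sigma : player n m q -> 'I_(2 ^ n')) (s : nat -> player n m q),
    bijective sigma /\ (forall a, s (sigma a) = a) /\
    ((k + n)%:Z <= tournament_value (@prank n m q) (game_value phi) s n')%R.
Proof.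
move=> H23 HN _ [a Ha] p q.
have Hm := m_le3n a H23.
have Hg := expn_gt0 2 n'.
have Hq : (6 * n + m + q = 2 ^ n')%N by rewrite /q /p; lia.
have qpos : (0 < q)%N by rewrite /q /p; lia.
pose p0 : player n m q := Fd n m (Ordinal qpos).
exists (sigma a H23 Hq HN), (s a p0 H23 Hq HN).
split; first exact: sigma_bij.
split; first exact: s_sigma.
apply: le_trans (total_bound a p0 H23 Hq HN).
rewrite lez_nat; lia.
Qed.
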